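(* Let $\varepsilon>0$, let $V$ be a probability space, and let $f\colon V\times V\to[0,\infty)$ be a measurable symmetric function. Then there exists a measurable partition $\mathcal P$ of $V$ into at most $2^{32\,\mathbb E f/\varepsilon^2}$ parts such that $$\big\|(f-f_{\mathcal P})\,1_{f_{\mathcal P}\le 1}\big\|_\square\le\varepsilon.$$
   Context: Symmetric means $f(x,y)=f(y,x)$; $\mathbb E f=\mathbb E_{x,y\in V}f(x,y)$ with $x,y$ independent according to the probability measure $\mu$ of $V$. For a partition $\mathcal P$ of $V$, $f_{\mathcal P}$ is defined by $f_{\mathcal P}(x,y)=\frac{1}{\mu(A)\mu(B)}\int_{A\times B}f$ for $(x,y)\in A\times B$, where $A,B$ are parts of $\mathcal P$ (zero-measure parts are ignored). $(f-f_{\mathcal P})1_{f_{\mathcal P}\le1}$ denotes the function equal to $f(x,y)-f_{\mathcal P}(x,y)$ where $f_{\mathcal P}(x,y)\le1$ and $0$ elsewhere. For $h\colon V_1\times V_2\to\mathbb R$ on probability spaces $V_1,V_2$, the cut norm is $\|h\|_\square=\sup_{A\subseteq V_1,B\subseteq V_2}\left|\mathbb E_{x\in V_1,y\in V_2}h(x,y)1_A(x)1_B(y)\right|$, over measurable $A,B$. *)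

(* Defs.v *)
From HB Require Import structures.
From mathcomp Require Import all_boot all_order all_algebra.
From mathcomp Require Import all_classical all_reals all_analysis.
Set Implicit Arguments. Unset Strict Implicit. Unset Printing Implicit Defensive.
Import Order.TTheory GRing.Theory Num.Theory.
Local Open Scope classical_set_scope.
Local Open Scope ring_scope.
Local Open Scope ereal_scope.

Section defs.
Context (R : realType) (d : measure_display) (V : measurableType d)
        (P : probability V R).

Definition expect2 (f : V * V -> R) : \bar R :=
  \int[P \x P]_z (f z)%:E.

(* A finite measurable partition of V indexed by 'I_N (parts may be empty). *)
Definition is_meas_partition (N : nat) (A : 'I_N -> set V) : Prop :=
  (forall i, measurable (A i)) /\ trivIset setT A /\ \bigcup_i A i = setT.

(* value of f_P on the cell A i x A j; zero-measure cells are ignored (value 0) *)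
Definition cell_avg (f : V * V -> R) (N : nat) (A : 'I_N -> set V)
  (i j : 'I_N) : \bar R :=
  let m := (fine (P (A i)) * fine (P (A j)))%R in
  if m == 0%R then 0
  else (\int[P \x P]_(z in A i `*` A j) (f z)%:E) * (m^-1)%:E.

(* f_P (possibly +oo when f is not integrable on a cell) *)
Definition fP (f : V * V -> R) (N : nat) (A : 'I_N -> set V) (z : V * V)
  : \bar R :=
  \sum_(i < N) \sum_(j < N) (\1_(A i `*` A j) z)%:E * cell_avg f A i j.

Definition trunc_diff (f : V * V -> R) (N : nat) (A : 'I_N -> set V)
  (z : V * V) : R :=
  if fP f A z <= 1 then (f z - fine (fP f A z))%R else 0%R.

Definition cut_norm (h : V * V -> R) : \bar R :=
  ereal_sup [set `| \int[P \x P]_(z in A `*` B) (h z)%:E |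
             | A in [set A | measurable A] & B in [set B | measurable B]].
End defs.

Definition part_bound (R : realType) (Ef : \bar R) (eps : R) : \bar R :=
  match Ef with
  | EFin r => (2 `^ (32 * r / eps ^+ 2))%:E
  | _ => +oo
  end.

(* Main.v *)
Require Import Defs.
From HB Require Import structures.
From mathcomp Require Import all_boot all_order all_algebra.
From mathcomp Require Import all_classical all_reals all_analysis.
From mathcomp Require Import measurable_realfun.
From mathcomp Require Import ring lra.
Import Order.TTheory GRing.Theory Num.Theory.
Set Implicit Arguments. Unset Strict Implicit. Unset Printing Implicit Defensive.
Local Open Scope classical_set_scope.
Local Open Scope ring_scope.
Local Open Scope ereal_scope.

Section gen.
Context (R : realType).

Definition USet (T0 : Type) (I : finType) (F : I -> set T0) (p : pred I) :=
  [set x | exists2 i, p i & F i x].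

Lemma USet_big (T0 : Type) (I : finType) (F : I -> set T0) (p : pred I) :
  USet F p = \big[setU/set0]_(i <- [seq i <- enum I | p i]) F i.
Proof.
rewrite big_filter -bigcup_seq_cond; apply/seteqP; split => x /=.
- by move=> [i pi Fi]; exists i => //=; rewrite mem_enum pi.
- by move=> [i /andP[_ pi] Fi]; exists i.
Qed.

Lemma USet_meas d0 (T0 : measurableType d0) (I : finType) (F : I -> set T0)
  (p : pred I) : (forall i, measurable (F i)) -> measurable (USet F p).
Proof. by move=> mF; rewrite USet_big; apply: bigsetU_measurable. Qed.

Lemma int_U d0 (T0 : measurableType d0) (m : {measure set T0 -> \bar R})
  (I : finType) (F : I -> set T0) (p : pred I) (g : T0 -> \bar R) :
  (forall i, measurable (F i)) -> trivIset setT F ->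
  measurable_fun setT g -> (forall x, 0 <= g x) ->
  \int[m]_(x in USet F p) g x = \sum_(i | p i) \int[m]_(x in F i) g x.
Proof.
move=> mF tF mg g0.
rewrite USet_big ge0_integral_bigsetU //.
- by rewrite big_filter big_enum_cond /=.
- by rewrite filter_uniq // enum_uniq.
- by apply: sub_trivIset tF.
- by apply: measurable_funS mg.
Qed.

Lemma meas_U d0 (T0 : measurableType d0) (m : {measure set T0 -> \bar R})
  (I : finType) (F : I -> set T0) (p : pred I) :
  (forall i, measurable (F i)) -> trivIset setT F ->
  m (USet F p) = \sum_(i | p i) m (F i).
Proof.
move=> mF tF.
have mU := USet_meas p mF.
rewrite -[LHS]mul1e -integral_cst // int_U //.
by apply: eq_bigr => i _; rewrite integral_cst // mul1e.
Qed.

Lemma int_UR d0 (T0 : measurableType d0) (m : {measure set T0 -> \bar R})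
  (I : finType) (F : I -> set T0) (p : pred I) (g : T0 -> R) :
  (forall i, measurable (F i)) -> trivIset setT F -> measurable_fun setT g ->
  \int[m]_(x in USet F p) (g x)%:E = \sum_(i | p i) \int[m]_(x in F i) (g x)%:E.
Proof.
move=> mF tF mg.
rewrite USet_big integral_bigsetU_EFin //.
- by rewrite big_filter big_enum_cond /=.
- by rewrite filter_uniq // enum_uniq.
- by apply: sub_trivIset tF.
- by apply/measurable_EFinP; apply: measurable_funS mg.
Qed.

End gen.

Section discrete.
Local Open Scope ring_scope.
Variable R : realFieldType.

Definition psi (t : R) := if t <= 2 then t ^+ 2 else 4 * t - 4.
Definition dpsi (t : R) := if t <= 2 then 2 * t else 4.
Definition Dg (x y : R) := psi x - psi y - dpsi y * (x - y).

Lemma Dg_ge0 x y : 0 <= x -> 0 <= y -> 0 <= Dg x y.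
Proof.
rewrite /Dg /psi /dpsi => hx hy.
have [h1|h1] := leP x 2; have [h2|h2] := leP y 2.
- have := sqr_ge0 (x - y); nra.
- have := sqr_ge0 (x - 2); nra.
- have := sqr_ge0 (y - 2); nra.
- lra.
Qed.

Lemma Dg_lb x y e : 0 <= x -> 0 <= y -> y <= 1 -> 0 < e -> e <= 1 ->
  e * `|x - y| <= Dg x y + e ^+ 2 / 4.
Proof.
rewrite /Dg /psi /dpsi => hx hy hy1 he he1.
have [h2|h2] := leP y 2; last lra.
have [h3|h3] := leP (x - y) 0.
- rewrite ler0_norm //.
  have [h1|h1] := leP x 2; last lra.
  have := sqr_ge0 (y - x - e / 2); nra.
- rewrite gtr0_norm //.
  have [h1|h1] := leP x 2.
    have := sqr_ge0 (x - y - e / 2); nra.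
  have : 0 <= (x - 2) * (3 - 2 * y) by apply: mulr_ge0; lra.
  have : 0 <= (1 - e) * (x - y) by apply: mulr_ge0; lra.
  have : 0 <= (1 - y) * (2 - y) by apply: mulr_ge0; lra.
  nra.
Qed.

Lemma psi_ge0 t : 0 <= t -> 0 <= psi t.
Proof. rewrite /psi => ht; have [h|h] := leP t 2; nra. Qed.

Lemma psi_le t : 0 <= t -> psi t <= 4 * t.
Proof.
rewrite /psi => ht; have [h|h] := leP t 2; last lra.
have : 0 <= t * (4 - t) by apply: mulr_ge0; lra.
nra.
Qed.


Section grouped.
Variables (K J : finType) (g : K -> J) (w a : K -> R).
Hypotheses (w0 : forall k, 0 <= w k) (a0 : forall k, 0 <= a k)
  (wa0 : forall k, w k = 0 -> a k = 0) (w1 : \sum_k w k = 1).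

Definition Wd j := \sum_(k | g k == j) w k.
Definition Ad j := \sum_(k | g k == j) a k.
Definition cd k := a k / w k.
Definition Cd j := Ad j / Wd j.
Local Notation W := Wd.
Local Notation A := Ad.
Local Notation c := cd.
Local Notation C := Cd.

Let wc k : w k * c k = a k.
Proof.
rewrite /cd; have [h|h] := eqVneq (w k) 0; first by rewrite h mul0r wa0.
by rewrite mulrC divfK.
Qed.

Let WC j : W j * C j = A j.
Proof.
rewrite /Cd; have [h|h] := eqVneq (W j) 0; last by rewrite mulrC divfK.
rewrite h mul0r /Ad big1 // => k /eqP gk; apply: wa0.
by apply: (psumr_eq0P _ h) => [i _|]; [exact: w0|exact/eqP].
Qed.

Let c0 k : 0 <= c k. Proof. by rewrite /cd divr_ge0. Qed.
Let W0 j : 0 <= W j. Proof. by rewrite sumr_ge0. Qed.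
Let A0 j : 0 <= A j. Proof. by rewrite sumr_ge0. Qed.
Let C0 j : 0 <= C j. Proof. by rewrite /Cd divr_ge0. Qed.

Lemma regroupK (F : K -> R) :
  \sum_k F k = \sum_j \sum_(k | g k == j) F k.
Proof. by rewrite (partition_big g predT). Qed.

Definition EQd := \sum_k w k * psi (c k).
Definition EPd := \sum_j W j * psi (C j).
Definition Gd := \sum_k w k * Dg (c k) (C (g k)).
Definition Xd (S : pred K) := \sum_j (if C j <= 1 then
   \sum_(k | (g k == j) && S k) (a k - C j * w k) else 0).

Lemma EQ_EP : EQd = EPd + Gd.
Proof.
rewrite /EQd /EPd /Gd (regroupK (fun k => w k * psi (c k))).
rewrite (regroupK (fun k => w k * Dg (c k) (C (g k)))) -big_split /=.
apply: eq_bigr => j _.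
rewrite [X in _ = _ + X](eq_bigr (fun k => w k * psi (c k) - (psi (C j) * w k +
    dpsi (C j) * (a k - C j * w k)))); last first.
  move=> k /eqP <-; rewrite -wc /Dg; ring.
rewrite sumrB big_split /= -!mulr_sumr sumrB -mulr_sumr -/(W j) -/(A j) -WC.
ring.
Qed.

Lemma subsum (P S : pred K) (F : K -> R) : (forall k, 0 <= F k) ->
  \sum_(k | P k && S k) F k <= \sum_(k | P k) F k.
Proof.
move=> F0; rewrite big_mkcondr; apply: ler_sum => k _.
by case: ifP => _ //; exact: F0.
Qed.

Lemma Xd_le1 S : `|Xd S| <= 1.
Proof.
rewrite /Xd; apply: (le_trans (ler_norm_sum _ _ _)).
rewrite [leRHS](_ : 1 = \sum_j W j); last by rewrite -w1 (regroupK w).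
apply: ler_sum => j _.
case: ifP => hC; last by rewrite normr0.
have h1 := subsum (fun k => g k == j) S w0.
have h2 := subsum (fun k => g k == j) S a0.
have h3 : 0 <= \sum_(k | (g k == j) && S k) a k by rewrite sumr_ge0.
have h4 : 0 <= \sum_(k | (g k == j) && S k) w k by rewrite sumr_ge0.
have h5 := WC j; have h6 := C0 j; have h7 := W0 j.
rewrite -[\sum_(k | g k == j) w k]/(W j) -[\sum_(k | g k == j) a k]/(A j) in h1 h2.
rewrite sumrB -mulr_sumr ler_norml; apply/andP; split; nra.
Qed.

Lemma increment S e : 0 < e -> e < `|Xd S| -> EPd + e ^+ 2 / 4 <= EQd.
Proof.
move=> e0 eX.
have e1 : e <= 1 by apply: ltW; apply: (lt_le_trans eX); exact: Xd_le1.
rewrite EQ_EP lerD2l.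
have hs : e ^+ 2 / 4 = \sum_k e ^+ 2 / 4 * w k by rewrite -mulr_sumr w1 mulr1.
have pos k j : 0 <= w k * Dg (c k) (C j) + e ^+ 2 / 4 * w k.
  apply: addr_ge0; apply: mulr_ge0 => //; first exact: Dg_ge0.
  by apply: divr_ge0 => //; apply: exprn_ge0; exact: ltW.
have key : e * `|Xd S| <= Gd + e ^+ 2 / 4.
  rewrite [X in _ <= _ + X]hs /Gd -big_split /=.
  rewrite (regroupK (fun k => _ + _)) /Xd.
  apply: (le_trans (ler_wpM2l (ltW e0) (ler_norm_sum _ _ _))).
  rewrite mulr_sumr; apply: ler_sum => j _.
  case: ifP => hC; last first.
    by rewrite normr0 mulr0 sumr_ge0.
  apply: (le_trans (ler_wpM2l (ltW e0) (ler_norm_sum _ _ _))).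
  rewrite mulr_sumr.
  apply: (le_trans _ (subsum (fun k => g k == j) S (fun k => pos k (g k)))).
  apply: ler_sum => k /andP[/eqP gk _]; rewrite gk.
  have -> : a k - C j * w k = w k * (c k - C j) by rewrite mulrBr wc mulrC.
  rewrite normrM ger0_norm ?w0 //.
  have := Dg_lb (c0 k) (C0 j) hC e0 e1.
  have := w0 k; nra.
have : e * e < e * `|Xd S| by rewrite ltr_pM2l.
nra.
Qed.

End grouped.
End discrete.

Local Open Scope ereal_scope.

Section main.
Context (R : realType) (d : measure_display) (V : measurableType d)
  (P : probability V R) (f : V * V -> R).
Hypotheses (mf : measurable_fun setT f) (f0 : forall z, (0 <= f z)%R)
  (fint : (P \x P).-integrable setT (EFin \o f)).
Local Notation mu := (P \x P).

Definition pm (X : set V) : R := fine (P X).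
Definition cint (X Y : set V) : R := fine (\int[mu]_(z in X `*` Y) (f z)%:E).

Lemma pmE X : measurable X -> P X = (pm X)%:E.
Proof.
move=> mX; rewrite /pm fineK // ge0_fin_numE //.
exact: (le_lt_trans (probability_le1 _ mX)) (ltry _).
Qed.

Lemma pm_ge0 X : (0 <= pm X)%R.
Proof. by rewrite /pm fine_ge0. Qed.

Lemma mfE : measurable_fun setT (EFin \o f).
Proof. exact/measurable_EFinP. Qed.

Lemma cintE X Y : measurable X -> measurable Y ->
  \int[mu]_(z in X `*` Y) (f z)%:E = (cint X Y)%:E.
Proof.
move=> mX mY; rewrite /cint fineK //; apply: integrable_fin_num.
  exact: measurableX.
by apply: integrableS fint => //; exact: measurableX.
Qed.

Lemma cint_ge0 X Y : (0 <= cint X Y)%R.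
Proof. by rewrite /cint fine_ge0 // integral_ge0 // => z _; rewrite lee_fin. Qed.

Lemma muX X Y : measurable X -> measurable Y -> mu (X `*` Y) = (pm X * pm Y)%:E.
Proof. by move=> mX mY; rewrite product_measure1E // EFinM -(pmE mX) -(pmE mY). Qed.

Lemma cint0 X Y : measurable X -> measurable Y -> (pm X * pm Y = 0)%R ->
  cint X Y = 0%R.
Proof.
move=> mX mY h; rewrite /cint null_set_integral //.
- exact: measurableX.
- by apply: measurable_funS mfE.
- by apply: (eq_trans (muX mX mY)); rewrite h.
Qed.

Lemma trivIX (T : finType) (B : T -> set V) : trivIset setT B ->
  trivIset setT (fun k : T * T => B k.1 `*` B k.2).
Proof.
move=> tB [i1 i2] [j1 j2] _ _ [[x y] [/= [h1 h2] [h3 h4]]].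
have e1 : i1 = j1 by apply: tB => //; exists x.
have e2 : i2 = j2 by apply: tB => //; exists y.
by rewrite e1 e2.
Qed.

Lemma USetX (T : finType) (B : T -> set V) p q :
  USet B p `*` USet B q = USet (fun k : T * T => B k.1 `*` B k.2) (fun k => p k.1 && q k.2).
Proof.
apply/seteqP; split => [[x y] [/= [i pi Bi] [j qj Bj]]|[x y] [[i j] /= /andP[pi qj] [Bi Bj]]].
- by exists (i, j) => //=; rewrite pi qj.
- by split; [exists i|exists j].
Qed.

Lemma cintU (T : finType) (B : T -> set V) p q :
  (forall i, measurable (B i)) -> trivIset setT B ->
  cint (USet B p) (USet B q) = (\sum_(k | p k.1 && q k.2) cint (B k.1) (B k.2))%R.
Proof.
move=> mB tB; apply: EFin_inj.
rewrite -cintE; [|exact: USet_meas|exact: USet_meas].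
apply: (eq_trans (congr1 (fun D => \int[mu]_(z in D) (f z)%:E) (USetX B p q))).
rewrite int_U //.
- by rewrite -sumEFin; apply: eq_bigr => k _; rewrite cintE.
- by move=> k; apply: measurableX.
- exact: trivIX.
- exact: mfE.
Qed.

Lemma pmU (T : finType) (B : T -> set V) p :
  (forall i, measurable (B i)) -> trivIset setT B ->
  pm (USet B p) = (\sum_(i | p i) pm (B i))%R.
Proof.
move=> mB tB; apply: EFin_inj.
rewrite -pmE; last exact: USet_meas.
apply: (eq_trans (meas_U P p mB tB)).
by rewrite -sumEFin; apply: eq_bigr => i _; apply: pmE.
Qed.


Definition mpart (T : finType) (A : T -> set V) :=
  [/\ forall i, measurable (A i), trivIset setT A & forall x, exists i, A i x].

Lemma mpartP N (A : 'I_N -> set V) : is_meas_partition A <-> mpart A.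
Proof.
rewrite /is_meas_partition /mpart; split => [[mA [tA cA]]|[mA tA cA]].
- split => // x; have : (\bigcup_i A i) x by rewrite cA.
  by move=> [i _ Ai]; exists i.
- split => //; split => //; apply/seteqP; split => x // _.
  by have [i Ai] := cA x; exists i.
Qed.

Definition cavg (T : finType) (A : T -> set V) (k : T * T) : R :=
  (cint (A k.1) (A k.2) / (pm (A k.1) * pm (A k.2)))%R.

Lemma cell_unique (T : finType) (A : T -> set V) (k k' : T * T) z :
  trivIset setT A -> (A k.1 `*` A k.2) z -> (A k'.1 `*` A k'.2) z -> k = k'.
Proof. by move=> tA h1 h2; apply: (trivIX tA) => //; exists z. Qed.

Lemma fP_cell N (A : 'I_N -> set V) (k : 'I_N * 'I_N) z :
  mpart A -> (A k.1 `*` A k.2) z -> fP P f A z = (cavg A k)%:E.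
Proof.
move=> [mA tA cA] zk.
rewrite /fP pair_big /= (bigD1 k) //= big1 ?adde0.
- rewrite indicE mem_set // mul1e /cell_avg.
  case: eqP => h.
  + by rewrite /cavg; rewrite /pm in h *; rewrite h invr0 mulr0.
  + by rewrite (cintE (mA _) (mA _)) -EFinM.
- move=> k' hk'; rewrite indicE memNset ?mul0e //.
  by move=> zk'; move/eqP: hk'; apply; exact: (cell_unique tA zk' zk).
Qed.

Lemma td_cell N (A : 'I_N -> set V) k z : mpart A -> (A k.1 `*` A k.2) z ->
  trunc_diff P f A z = if (cavg A k <= 1)%R then (f z - cavg A k)%R else 0%R.
Proof. by move=> pA zk; rewrite /trunc_diff (fP_cell pA zk) lee_fin /=. Qed.

Lemma td_sum N (A : 'I_N -> set V) : mpart A ->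
  trunc_diff P f A = fun z => (\sum_(k : 'I_N * 'I_N) \1_(A k.1 `*` A k.2) z *
     (if cavg A k <= 1 then f z - cavg A k else 0))%R.
Proof.
move=> pA; apply/funext => z; have [mA tA cA] := pA.
case: z => x y; have [i Ai] := cA x; have [j Aj] := cA y.
have zk : (A (i, j).1 `*` A (i, j).2) (x, y) by [].
rewrite (td_cell pA zk) (bigD1 (i, j)) //= big1 ?addr0.
- by rewrite indicE mem_set // mul1r.
- move=> k' hk'; rewrite indicE memNset ?mul0r //.
  by move=> zk'; move/eqP: hk'; apply; exact: (cell_unique tA zk' zk).
Qed.

Lemma td_meas N (A : 'I_N -> set V) : mpart A ->
  measurable_fun setT (trunc_diff P f A).
Proof.
move=> pA; have [mA _ _] := pA; rewrite (td_sum pA); apply: measurable_sum => k.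
have h1 : measurable_fun setT (\1_(A k.1 `*` A k.2) : V * V -> R).
  by apply: measurable_indic; apply: measurableX.
have h2 : measurable_fun setT
    (fun z => if (cavg A k <= 1)%R then (f z - cavg A k)%R else 0%R).
  case: (cavg A k <= 1)%R; last exact: measurable_cst.
  exact: (measurable_funB mf (measurable_cst _)).
exact: (measurable_funM h1 h2).
Qed.


Lemma int_cstX X Y c : measurable X -> measurable Y ->
  mu.-integrable (X `*` Y) (EFin \o cst c).
Proof.
move=> mX mY; apply/integrableP; split.
  by apply/measurable_EFinP; exact: measurable_cst.
rewrite (eq_integral (cst `|c|%:E)) // integral_cst; last exact: measurableX.
rewrite (_ : _ (X `*` Y) = (pm X * pm Y)%:E); last exact: muX.
by rewrite -EFinM ltry.
Qed.

Lemma td_int N (A : 'I_N -> set V) SA SB : mpart A -> measurable SA -> measurable SB ->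
  \int[mu]_(z in SA `*` SB) (trunc_diff P f A z)%:E =
  (\sum_(k : 'I_N * 'I_N) (if cavg A k <= 1 then cint (SA `&` A k.1) (SB `&` A k.2)
     - cavg A k * (pm (SA `&` A k.1) * pm (SB `&` A k.2)) else 0))%:E.
Proof.
move=> pA mSA mSB; have [mA tA cA] := pA.
have E : SA `*` SB = USet (fun k : 'I_N * 'I_N => (SA `&` A k.1) `*` (SB `&` A k.2)) predT.
  apply/seteqP; split => [[x y] [/= hx hy]|[x y] [k _ [[/= h1 _] [h2 _]]]] //.
  have [i Ai] := cA x; have [j Aj] := cA y.
  by exists (i, j).
apply: (eq_trans (congr1 (fun D => \int[mu]_(z in D) (trunc_diff P f A z)%:E) E)).
rewrite int_UR; last 3 first.
- by move=> k; apply: measurableX; apply: measurableI.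
- move=> k k' _ _ [z [[[_ h1] [_ h2]] [[_ h3] [_ h4]]]].
  by apply: (cell_unique tA (z := z)).
- exact: td_meas.
rewrite -sumEFin; apply: eq_bigr => k _.
rewrite (eq_integral (fun z => (if (cavg A k <= 1)%R then (f z - cavg A k)%R else 0%R)%:E)); last first.
  move=> [x y]; rewrite in_setE => -[[_ h1] [_ h2]].
  by rewrite (td_cell (k := k) pA).
have mD : measurable ((SA `&` A k.1) `*` (SB `&` A k.2)).
  by apply: measurableX; apply: measurableI.
case: ifP => hc; last exact: integral0.
rewrite (eq_integral (fun z => (f z)%:E - (cst (cavg A k) z)%:E)) //.
rewrite integralB_EFin //.
- rewrite cintE; [|exact: measurableI|exact: measurableI].
  rewrite (eq_integral (cst (cavg A k)%:E)) // integral_cst //.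
  rewrite (_ : _ ((SA `&` A k.1) `*` (SB `&` A k.2)) = (pm (SA `&` A k.1) * pm (SB `&` A k.2))%:E).
    by rewrite -EFinM -EFinB.
  by apply: muX; apply: measurableI.
- by apply: integrableS fint.
- by apply: int_cstX; apply: measurableI.
Qed.

Definition energy (T : finType) (B : T -> set V) : R :=
  (\sum_(k : T * T) pm (B k.1) * pm (B k.2) * psi (cavg B k))%R.

Section refine.
Variables (N : nat) (A : 'I_N -> set V) (SA SB : set V).
Hypotheses (pA : mpart A) (mSA : measurable SA) (mSB : measurable SB).

Definition Uref := ('I_N * bool * bool)%type.
Definition Bref (u : Uref) : set V :=
  A u.1.1 `&` (if u.1.2 then SA else ~` SA) `&` (if u.2 then SB else ~` SB).

Lemma Bref_part : mpart Bref.
Proof.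
have [mA tA cA] := pA; split.
- move=> [[i s] t] /=; apply: measurableI; first apply: measurableI => //.
  + by case: s => //; apply: measurableC.
  + by case: t => //; apply: measurableC.
- move=> [[i s] t] [[i' s'] t'] _ _ [x [[[h1 h2] h3] [[h1' h2'] h3']]].
  have ei : i = i' by apply: tA => //; exists x.
  rewrite ei; clear h1 h1'; move: h2 h2' h3 h3' => /=.
  by case: s; case: s'; case: t; case: t' => //= *; exfalso; auto.
- move=> x; have [i Ai] := cA x.
  have [hA|hA] := pselect (SA x); have [hB|hB] := pselect (SB x).
  + by exists (i, true, true).
  + by exists (i, true, false).
  + by exists (i, false, true).
  + by exists (i, false, false).
Qed.

Lemma USetI (T0 : Type) (I : finType) (F : I -> set T0) (p : pred I) u x :
  p u -> F u x -> USet F p x.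
Proof. by move=> pu Fu; rewrite /USet /=; exists u. Qed.

Lemma A_U i : A i = USet Bref (fun u => u.1.1 == i).
Proof.
apply/seteqP; split => [x Ai|x [[[i' s] t] /= /eqP -> [[]]] //].
have [hA|hA] := pselect (SA x); have [hB|hB] := pselect (SB x).
+ by apply: (USetI (u := (i, true, true))) => /=; [rewrite ?eqxx|do 2?split].
+ by apply: (USetI (u := (i, true, false))) => /=; [rewrite ?eqxx|do 2?split].
+ by apply: (USetI (u := (i, false, true))) => /=; [rewrite ?eqxx|do 2?split].
+ by apply: (USetI (u := (i, false, false))) => /=; [rewrite ?eqxx|do 2?split].
Qed.

Lemma SA_U i : SA `&` A i = USet Bref (fun u => (u.1.1 == i) && u.1.2).
Proof.
apply/seteqP; split => [x [hA Ai]|x [[[i' s] t] /= /andP[/eqP -> ->] [[h1 h2] _]]]; last by split.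
have [hB|hB] := pselect (SB x).
+ by apply: (USetI (u := (i, true, true))) => /=; [rewrite ?eqxx|do 2?split].
+ by apply: (USetI (u := (i, true, false))) => /=; [rewrite ?eqxx|do 2?split].
Qed.

Lemma SB_U j : SB `&` A j = USet Bref (fun u => (u.1.1 == j) && u.2).
Proof.
apply/seteqP; split => [x [hB Aj]|x [[[i' s] t] /= /andP[/eqP -> ->] [[h1 _] h3]]]; last by split.
have [hA|hA] := pselect (SA x).
+ by apply: (USetI (u := (j, true, true))) => /=; [rewrite ?eqxx|do 2?split].
+ by apply: (USetI (u := (j, false, true))) => /=; [rewrite ?eqxx|do 2?split].
Qed.

Lemma T_U : setT = USet Bref predT.
Proof.
have [_ _ cB] := Bref_part.
by apply/seteqP; split => [x _|//]; have [u Bu] := cB x; exists u.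
Qed.

Local Notation K := (Uref * Uref)%type.
Definition gref (k : K) : 'I_N * 'I_N := (k.1.1.1, k.2.1.1).
Definition wref (k : K) : R := (pm (Bref k.1) * pm (Bref k.2))%R.
Definition aref (k : K) : R := cint (Bref k.1) (Bref k.2).
Definition Sref (k : K) : bool := k.1.1.2 && k.2.2.

Lemma mB u : measurable (Bref u).
Proof. by have [] := Bref_part. Qed.
Lemma tB : trivIset setT Bref.
Proof. by have [] := Bref_part. Qed.

Lemma sum_nu : (\sum_u pm (Bref u) = 1)%R.
Proof.
rewrite -(pmU predT mB tB) -T_U /pm.
by rewrite probability_setT.
Qed.

Lemma pm_prod (p q : pred Uref) : (pm (USet Bref p) * pm (USet Bref q) =
  \sum_(k : K | p k.1 && q k.2) wref k)%R.
Proof. by rewrite !(pmU _ mB tB) big_distrlr /= pair_big_dep. Qed.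

Lemma wref1 : (\sum_k wref k = 1)%R.
Proof.
have := pm_prod predT predT; rewrite -T_U => <-.
by rewrite /pm probability_setT /= mulr1.
Qed.

Lemma W_eq j : Wd gref wref j = (pm (A j.1) * pm (A j.2))%R.
Proof.
rewrite (A_U j.1) (A_U j.2) pm_prod /Wd; apply: eq_bigl => k.
by case: j => j1 j2; rewrite /gref xpair_eqE.
Qed.

Lemma A_eq j : Ad gref aref j = cint (A j.1) (A j.2).
Proof.
rewrite (A_U j.1) (A_U j.2) (cintU _ _ mB tB) /Ad; apply: eq_bigl => k.
by case: j => j1 j2; rewrite /gref xpair_eqE.
Qed.

Lemma C_eq j : Cd gref wref aref j = cavg A j.
Proof. by rewrite /Cd A_eq W_eq. Qed.

Lemma Xd_eq : Xd gref wref aref Sref =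
  (\sum_(k : 'I_N * 'I_N) (if cavg A k <= 1 then cint (SA `&` A k.1) (SB `&` A k.2)
     - cavg A k * (pm (SA `&` A k.1) * pm (SB `&` A k.2)) else 0))%R.
Proof.
rewrite /Xd; apply: eq_bigr => j _; rewrite C_eq.
case: ifP => // _.
rewrite sumrB -mulr_sumr (SA_U j.1) (SB_U j.2) pm_prod (cintU _ _ mB tB).
have E : forall k, ((gref k == j) && Sref k) =
    (((k.1.1.1 == j.1) && k.1.1.2) && ((k.2.1.1 == j.2) && k.2.2)).
  move=> k; case: j => j1 j2; rewrite /gref /Sref xpair_eqE /=.
  by case: (k.1.1.1 == j1); case: (k.2.1.1 == j2); case: k.1.1.2.
by rewrite !(eq_bigl _ _ E).
Qed.

Lemma EQ_eq : EQd wref aref = energy Bref.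
Proof. by []. Qed.

Lemma EP_eq : EPd gref wref aref = energy A.
Proof.
rewrite /EPd /energy; apply: eq_bigr => j _.
by rewrite W_eq /Cd A_eq W_eq.
Qed.

Lemma refine_step e : (0 < e)%R ->
  e%:E < `| \int[mu]_(z in SA `*` SB) (trunc_diff P f A z)%:E | ->
  (energy A + e ^+ 2 / 4 <= energy Bref)%R.
Proof.
move=> e0; rewrite td_int // abse_EFin lte_fin -Xd_eq => h.
rewrite -EQ_eq -EP_eq.
have w0 : forall k, (0 <= wref k)%R by move=> k; rewrite /wref mulr_ge0 // pm_ge0.
have a0 : forall k, (0 <= aref k)%R by move=> k; exact: cint_ge0.
have wa0 : forall k, wref k = 0%R -> aref k = 0%R.
  by move=> k; apply: cint0; apply: mB.
exact: (@increment R _ _ gref wref aref w0 a0 wa0 wref1 Sref e e0 h).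
Qed.

Definition Bfin (i : 'I_#|{: Uref}|) : set V := Bref (enum_val i).

Lemma Bfin_part : mpart Bfin.
Proof.
have [mB' tB' cB] := Bref_part; split.
- by move=> i; apply: mB'.
- move=> i j _ _ [x [h1 h2]]; apply: enum_val_inj.
  by apply: tB' => //; exists x.
- move=> x; have [u Bu] := cB x; exists (enum_rank u).
  by rewrite /Bfin enum_rankK.
Qed.

Lemma energy_Bfin : energy Bfin = energy Bref.
Proof.
rewrite /energy (reindex (fun k : 'I_#|{: Uref}| * 'I_#|{: Uref}| =>
  (enum_val k.1, enum_val k.2))) //=.
apply: onW_bij; exists (fun k : K => (enum_rank k.1, enum_rank k.2)).
- by move=> [i j] /=; rewrite !enum_valK.
- by move=> [u v] /=; rewrite !enum_rankK.
Qed.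

Lemma card_Uref : #|{: Uref}| = (N * 4)%N.
Proof. by rewrite !card_prod card_ord card_bool -mulnA. Qed.

End refine.

Lemma energy_ge0 (T : finType) (B : T -> set V) : (0 <= energy B)%R.
Proof.
rewrite /energy sumr_ge0 // => k _; rewrite mulr_ge0 ?mulr_ge0 ?pm_ge0 //.
by apply: psi_ge0; rewrite /cavg divr_ge0 ?mulr_ge0 ?pm_ge0 ?cint_ge0.
Qed.

Lemma step N (A : 'I_N -> set V) e : mpart A -> (0 < e)%R ->
  ~ (cut_norm P (trunc_diff P f A) <= e%:E) ->
  exists N' (A' : 'I_N' -> set V), [/\ mpart A', N' = (N * 4)%N &
     (energy A + e ^+ 2 / 4 <= energy A')%R].
Proof.
move=> pA e0 /negP; rewrite -ltNge => /ereal_sup_gt [y [SA mSA [SB mSB <-]]] hy.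
exists #|{: Uref N}|, (Bfin A SA SB); split.
- exact: Bfin_part.
- exact: card_Uref.
- by rewrite energy_Bfin; apply: refine_step.
Qed.



Lemma sum_cint N (A : 'I_N -> set V) : mpart A ->
  (\sum_(k : 'I_N * 'I_N) cint (A k.1) (A k.2))%R = fine (expect2 P f).
Proof.
move=> [mA tA cA].
have UT : USet A predT = setT.
  by apply/seteqP; split => [//|x _]; have [i Ai] := cA x; exists i.
have := cintU predT predT mA tA; rewrite UT => <-.
rewrite /cint /expect2.
by rewrite setXTT.
Qed.

Lemma energy_le N (A : 'I_N -> set V) : mpart A ->
  (energy A <= 4 * fine (expect2 P f))%R.
Proof.
move=> pA; rewrite -(sum_cint pA) mulr_sumr /energy; apply: ler_sum => k _.
rewrite /cavg; set w := (pm _ * pm _)%R; set a := cint _ _.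
have w0 : (0 <= w)%R by rewrite mulr_ge0 ?pm_ge0.
have a0 : (0 <= a)%R by exact: cint_ge0.
have [->|wn] := eqVneq w 0%R; first by rewrite mul0r mulr_ge0.
apply: (le_trans (ler_wpM2l w0 (psi_le (divr_ge0 a0 w0)))).
by rewrite mulrCA [(w * _)%R]mulrCA divff // mulr1.
Qed.

Lemma mpart1 : mpart (fun _ : 'I_1 => @setT V).
Proof.
split => //; last by move=> x; exists ord0.
by move=> i j _ _ _; rewrite (ord1 i) (ord1 j).
Qed.

Lemma iter e (e0 : (0 < e)%R) k :
  (exists N (A : 'I_N -> set V) (j : nat), [/\ mpart A, (N <= 4 ^ j)%N,
      (j%:R * (e ^+ 2 / 4) <= 4 * fine (expect2 P f))%R &
      cut_norm P (trunc_diff P f A) <= e%:E])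
  \/ (exists N (A : 'I_N -> set V),
      [/\ mpart A, (N <= 4 ^ k)%N & (k%:R * (e ^+ 2 / 4) <= energy A)%R]).
Proof.
elim: k => [|k [g|[N [A [pA hN hE]]]]]; [right|by left|].
- exists 1%N, (fun _ => setT); split => //; first exact: mpart1.
  by rewrite mul0r energy_ge0.
- have hk := le_trans hE (energy_le pA).
  have [c|c] := pselect (cut_norm P (trunc_diff P f A) <= e%:E).
  + by left; exists N, A, k.
  + right; have [N' [A' [pA' hN' hE']]] := step pA e0 c.
    exists N', A'; split => //; first rewrite hN'.
    * by rewrite expnS mulnC leq_mul2l hN orbT.
    * apply: le_trans hE'; rewrite -addn1 natrD mulrDl mul1r lerD2r //.
Qed.

Lemma main_finite e : (0 < e)%R -> exists N (A : 'I_N -> set V),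
  [/\ is_meas_partition A,
      (N%:R <= 2 `^ (32 * fine (expect2 P f) / e ^+ 2))%R &
      cut_norm P (trunc_diff P f A) <= e%:E].
Proof.
move=> e0; set r := fine (expect2 P f).
set dl := (e ^+ 2 / 4)%R.
have dl0 : (0 < dl)%R by rewrite /dl divr_gt0 // exprn_gt0.
pose k := (Num.trunc (4 * r / dl)).+1.
have hk : (4 * r < k%:R * dl)%R.
  by rewrite -ltr_pdivrMr // /k; exact: truncnS_gt.
have [[N [A [j [pA hN hj hc]]]]|[N [A [pA _ hE']]]] := iter e0 k; last first.
  have := energy_le pA; rewrite -/r => h; exfalso.
  have := le_lt_trans (le_trans hE' h) hk; by rewrite ltxx.
exists N, A; split => //; first exact/mpartP.
apply: (@le_trans _ _ ((4 ^ j)%N%:R)); first by rewrite ler_nat.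
have -> : ((4 ^ j)%N%:R = 2 `^ (2 * j)%N%:R :> R)%R.
  rewrite powR_mulrn ?ler0n // exprM natrX.
  by have -> : (2 ^+ 2 = 4 :> R)%R by rewrite expr2 -natrM.
apply: ler_powR; first by rewrite ler1n.
have e2 : (0 < e ^+ 2)%R by rewrite exprn_gt0.
rewrite ler_pdivlMr // natrM.
move: hj; rewrite /dl => hj.
rewrite -/r in hj; nra.
Qed.

End main.

Section infinite.
Context (R : realType) (d : measure_display) (V : measurableType d)
  (P : probability V R) (f : V * V -> R).

Lemma td_inf : expect2 P f = +oo ->
  trunc_diff P f (fun _ : 'I_1 => @setT V) = fun _ => 0%R.
Proof.
move=> hE; apply/funext => z; rewrite /trunc_diff /fP !big_ord1.
rewrite indicE mem_set // mul1e /cell_avg probability_setT /= mulr1 oner_eq0.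
rewrite setXTT.
have -> : \int[P \x P]_(z in setT) (f z)%:E = +oo by exact: hE.
by rewrite invr1 mule1.
Qed.

Lemma cut_inf e : (0 <= e)%R -> expect2 P f = +oo ->
  cut_norm P (trunc_diff P f (fun _ : 'I_1 => @setT V)) <= e%:E.
Proof.
move=> e0 hE; rewrite td_inf //; apply: ge_ereal_sup => y [SA _ [SB _ <-]].
by rewrite integral0 abse0 lee_fin.
Qed.

End infinite.

Unset Implicit Arguments.
Theorem theorem2p2 (R : realType) (eps : R) (d : measure_display)
  (V : measurableType d) (P : probability V R) (f : V * V -> R) :
  (0 < eps)%R ->
  measurable_fun setT f ->
  (forall z, (0 <= f z)%R) ->
  (forall x y, f (x, y) = f (y, x)) ->
  exists (N : nat) (A : 'I_N -> set V),
    is_meas_partition A /\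
    (N%:R)%:E <= part_bound (expect2 P f) eps /\
    cut_norm P (trunc_diff P f A) <= eps%:E.
Proof.
move=> e0 mf f0 _.
have mfE : measurable_fun setT (EFin \o f) by exact/measurable_EFinP.
have Ege0 : 0 <= expect2 P f by apply: integral_ge0 => z _; rewrite lee_fin.
case hE : (expect2 P f) => [r| |].
- have fint : (P \x P).-integrable setT (EFin \o f).
    apply/integrableP; split => //.
    rewrite (eq_integral (fun z => (f z)%:E)); last first.
      by move=> z _; rewrite abse_EFin ger0_norm.
    by have := hE; rewrite /expect2 => ->; rewrite ltry.
  have [N [A [pA hN hc]]] := @main_finite R d V P f mf f0 fint eps e0.
  exists N, A; split => //; split => //.
  by rewrite /part_bound lee_fin; rewrite hE in hN.
- exists 1%N, (fun _ => setT); split; first exact/mpartP/mpart1.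
  split; first by rewrite /part_bound leey.
  exact: cut_inf (ltW e0) hE.
- by rewrite hE in Ege0.
Qed.
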